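(* Let $p\ge2$, $K\ge1$ be integers, $s_1\ge0$ an integer, $s_2,\dots,s_p\in\mathbb{Z}$, and $z_1,\dots,z_p$ complex numbers of modulus $<1$. Then $$\mathrm{La}^K_{-s_1,s_2,\dots,s_p}(z_1,\dots,z_p)=P_{s_1}(K,z_1)\,\mathrm{La}^K_{s_2,\dots,s_p}(z_2,\dots,z_p)-\sum_{\ell=0}^{s_1}\frac{a_{1,\ell}(s_1,z_1)}{(1-z_1)^{s_1+1}z_1}\sum_{m=0}^{\ell}\binom{\ell}{m}(-1)^{\ell-m}\mathrm{La}^K_{s_2-m,s_3,\dots,s_p}(z_1z_2,z_3,\dots,z_p)$$ $$-\sum_{\ell=0}^{s_1}\frac{a_{2,\ell}(s_1,z_1)}{(1-z_1)^{s_1+1}}\sum_{m=0}^{\ell}\binom{\ell}{m}(-1)^{\ell-m}\mathrm{La}^K_{s_2-m,s_3,\dots,s_p}(z_2,\dots,z_p).$$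
   Context: Truncated large polylogarithm: $\mathrm{La}^K_{t_1,\dots,t_r}(w_1,\dots,w_r)=\sum_{K\ge k_1\ge\cdots\ge k_r\ge1}\frac{w_1^{k_1}\cdots w_r^{k_r}}{k_1^{t_1}\cdots k_r^{t_r}}$ (equal to $1$ when $r=0$). For $s\ge0$ and $K\ge0$, $P_s(K,z)=\sum_{k=1}^Kk^sz^k=\big(z\frac{d}{dz}\big)^s\big(z\frac{1-z^K}{1-z}\big)$, and $a_{1,\ell}(s,z),a_{2,\ell}(s,z)$ ($0\le\ell\le s$) are the polynomials in $z$, independent of $K$, such that $P_s(K,z)=\sum_{\ell=0}^s\frac{z^Ka_{1,\ell}(s,z)+a_{2,\ell}(s,z)}{(1-z)^{s+1}}K^\ell$ for all $K\ge0$ (with $0^0=1$); $a_{1,\ell}(s,z)$ is divisible by $z$. *)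

(* Defs.v *)
(* complex numbers are R[i] for an arbitrary real closed field R
   (this includes the usual complex numbers). *)
From HB Require Import structures.
From mathcomp Require Import all_boot all_order all_algebra.
From mathcomp Require Import complex.
Set Implicit Arguments. Unset Strict Implicit. Unset Printing Implicit Defensive.
Import Order.TTheory GRing.Theory Num.Theory.
Local Open Scope ring_scope.

Section Defs.
Variable C : fieldType.

(* Truncated large polylogarithm La^K_{t_1..t_r}(w_1..w_r), indices given as a
   list of pairs (t_i, w_i):
     sum_{K >= k_1 >= ... >= k_r >= 1} w_1^k_1 ... w_r^k_r / (k_1^t_1 ... k_r^t_r),
   equal to 1 for the empty list. *)
Fixpoint La (K : nat) (l : seq (int * C)) : C :=
  match l with
  | [::] => 1
  | (t, w) :: l' => \sum_(1 <= k < K.+1) w ^+ k / ((k%:R : C) ^ t) * La k l'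
  end.

Definition Pfun (s K : nat) (z : C) : C :=
  \sum_(1 <= k < K.+1) (k%:R : C) ^+ s * z ^+ k.

(* The defining property of the polynomials a_{1,l}(s,z), a_{2,l}(s,z), 0<=l<=s:
   P_s(K,z) = sum_{l=0}^s (z^K a_{1,l}(s,z) + a_{2,l}(s,z))/(1-z)^{s+1} K^l
   for all K >= 0 (as rational functions of z, i.e. for all z <> 1),
   and a_{1,l}(s,z) is divisible by z. *)
Definition a_polys_spec (s : nat) (a1 a2 : nat -> {poly C}) : Prop :=
  (forall l, 'X %| a1 l) /\
  (forall (K : nat) (z : C), z != 1 ->
     Pfun s K z =
     \sum_(0 <= l < s.+1)
        (z ^+ K * (a1 l).[z] + (a2 l).[z]) / (1 - z) ^+ s.+1 * (K%:R) ^+ l).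
End Defs.

(* Main.v *)
Require Import Defs.
From HB Require Import structures.
From mathcomp Require Import all_boot all_order all_algebra.
From mathcomp Require Import complex.
From mathcomp Require Import ring.
Import Order.TTheory GRing.Theory Num.Theory.
Local Open Scope ring_scope.

Lemma swapP (C : fieldType) (s : nat) (z : C) (F : nat -> C) (K : nat) :
  \sum_(1 <= k < K.+1) ((k%:R : C) ^+ s * z ^+ k) * \sum_(1 <= j < k.+1) F j =
  \sum_(1 <= j < K.+1) F j * (Pfun s K z - Pfun s j.-1 z).
Proof.
elim: K => [|K IH]; first by rewrite /Pfun !big_geq.
rewrite big_nat_recr //= IH.
rewrite [in RHS]big_nat_recr //=.
have -> : Pfun s K.+1 z = Pfun s K z + (K.+1%:R ^+ s * z ^+ K.+1).
  by rewrite /Pfun big_nat_recr.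
rewrite [\sum_(1 <= j < K.+2) F j]big_nat_recr //=.
set g := K.+1%:R ^+ s * z ^+ K.+1.
have -> : \sum_(1 <= j < K.+1) F j * (Pfun s K z + g - Pfun s j.-1 z) =
  \sum_(1 <= j < K.+1) F j * (Pfun s K z - Pfun s j.-1 z) + (\sum_(1 <= j < K.+1) F j) * g.
  by rewrite big_distrl -big_split /=; apply: eq_bigr => i _; ring.
ring.
Qed.

Lemma binomB (C : comRingType) (x : C) (l : nat) :
  (x - 1) ^+ l = \sum_(0 <= m < l.+1) ('C(l, m)%:R * (-1) ^+ (l - m) * x ^+ m).
Proof.
rewrite addrC exprDn big_mkord; apply: eq_bigr => i _.
by rewrite -mulr_natl; ring.
Qed.

Lemma Eexp (C : numFieldType) (z : C) (j m : nat) (s2 : int) : (j != 0)%N ->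
  z ^+ j / (j%:R : C) ^ (s2 - m%:Z) = z ^+ j / (j%:R : C) ^ s2 * (j%:R : C) ^+ m.
Proof.
move=> hj; have hj' : (j%:R : C) != 0 by rewrite pnatr_eq0.
rewrite expfzDr // -invr_expz invfM invrK -exprnP; ring.
Qed.

Lemma main_gen (C : numFieldType) (K s1 : nat) (s2 : int) (z1 z2 : C)
    (rest : seq (int * C)) (a1 a2 : nat -> {poly C}) :
  z1 != 1 ->
  a_polys_spec s1 a1 a2 ->
  La K ((- (s1%:Z), z1) :: (s2, z2) :: rest) =
    Pfun s1 K z1 * La K ((s2, z2) :: rest)
  - \sum_(0 <= l < s1.+1)
      ((a1 l %/ 'X).[z1] / (1 - z1) ^+ s1.+1) *
      \sum_(0 <= m < l.+1)
        ('C(l, m)%:R * (-1) ^+ (l - m) * La K ((s2 - m%:Z, z1 * z2) :: rest))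
  - \sum_(0 <= l < s1.+1)
      ((a2 l).[z1] / (1 - z1) ^+ s1.+1) *
      \sum_(0 <= m < l.+1)
        ('C(l, m)%:R * (-1) ^+ (l - m) * La K ((s2 - m%:Z, z2) :: rest)).
Proof.
move=> z1n1 [hdiv hspec].
set F := fun j : nat => z2 ^+ j / (j%:R : C) ^ s2 * La j rest.
rewrite /=.
under eq_bigr => k _ do rewrite -invr_expz invrK -exprnP [z1 ^+ k * _]mulrC.
rewrite swapP.
rewrite (eq_bigr (fun j => F j * Pfun s1 K z1 - F j * Pfun s1 j.-1 z1)); last first.
  by move=> j _; rewrite /F; exact: mulrBr.
rewrite sumrB -big_distrl /= mulrC -addrA -opprD; congr (_ - _).
set D := (1 - z1) ^+ s1.+1.
have claim1 : forall j, (1 <= j)%N ->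
  z2 ^+ j / (j%:R : C) ^ s2 * La j rest * Pfun s1 j.-1 z1 =
  \sum_(0 <= l < s1.+1)
    ((a1 l %/ 'X).[z1] / D *
       \sum_(0 <= m < l.+1) ('C(l, m)%:R * (-1) ^+ (l - m) *
          ((z1 * z2) ^+ j / (j%:R : C) ^ (s2 - m%:Z) * La j rest))
   + (a2 l).[z1] / D *
       \sum_(0 <= m < l.+1) ('C(l, m)%:R * (-1) ^+ (l - m) *
          (z2 ^+ j / (j%:R : C) ^ (s2 - m%:Z) * La j rest))).
  case=> [//|i] _ /=.
  rewrite hspec // big_distrr /=; apply: eq_bigr => l _.
  have -> : (i%:R : C) = i.+1%:R - 1 by rewrite mulrSr addrK.
  have ha : (a1 l).[z1] = (a1 l %/ 'X).[z1] * z1 by rewrite -hornerMX divpK.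
  rewrite binomB ha.
  under eq_bigr => m _ do rewrite Eexp //.
  under [X in _ = _ + _ * X]eq_bigr => m _ do rewrite Eexp //.
  rewrite !big_distrr /= -big_split /=; apply: eq_bigr => m _.
  rewrite exprMn !(exprS z1) !(exprS z2) /D; ring.
rewrite (eq_big_nat _ _ (fun j hj => claim1 j (andP hj).1)) exchange_big_nat /= -big_split /=.
apply: eq_bigr => l _; rewrite big_split -!big_distrr /=.
congr (_ * _ + _ * _); rewrite exchange_big_nat /=; apply: eq_bigr => m _;
  by rewrite big_distrr.
Qed.

Theorem mainTheorem9 (R : rcfType) (K s1 : nat) (s2 : int) (z1 z2 : R[i])
    (rest : seq (int * R[i])) (a1 a2 : nat -> {poly R[i]}) :
  (1 <= K)%N ->
  `|z1| < 1 -> `|z2| < 1 -> (forall q, q \in rest -> `|q.2| < 1) ->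
  a_polys_spec s1 a1 a2 ->
  La K ((- (s1%:Z), z1) :: (s2, z2) :: rest) =
    Pfun s1 K z1 * La K ((s2, z2) :: rest)
  - \sum_(0 <= l < s1.+1)
      ((a1 l %/ 'X).[z1] / (1 - z1) ^+ s1.+1) *
      \sum_(0 <= m < l.+1)
        ('C(l, m)%:R * (-1) ^+ (l - m) * La K ((s2 - m%:Z, z1 * z2) :: rest))
  - \sum_(0 <= l < s1.+1)
      ((a2 l).[z1] / (1 - z1) ^+ s1.+1) *
      \sum_(0 <= m < l.+1)
        ('C(l, m)%:R * (-1) ^+ (l - m) * La K ((s2 - m%:Z, z2) :: rest)).
Proof.
move=> _ hz1 _ _ hs; apply: main_gen hs.
by apply/eqP => e; move: hz1; rewrite e normr1 ltxx.
Qed.
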